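(* Let $K\in\mathbb{N}^+$ and let $\varrho:\mathbb{R}\to\mathbb{R}$ be real analytic and not a polynomial on an interval $(\alpha,\beta)$ with $\beta>\alpha$. Then there exists $w_0\in\big(-\tfrac{\beta-\alpha}{2K},\tfrac{\beta-\alpha}{2K}\big)$ such that the numbers $\varrho\big(\tfrac{\alpha+\beta}{2}+kw_0\big)$, $k=1,2,\dots,K$, are rationally independent.
   Context: Real numbers $a_1,\dots,a_K$ are rationally independent if the only $(\lambda_1,\dots,\lambda_K)\in\mathbb{Q}^K$ with $\sum_{k=1}^K\lambda_k a_k=0$ is $(0,\dots,0)$. *)

(* Defs.v *)
From Stdlib Require Import Reals QArith List.
Open Scope R_scope.

Definition real_analytic_on (rho : R -> R) (a b : R) : Prop :=
  forall x0, a < x0 < b ->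
    exists r, 0 < r /\ exists c : nat -> R,
      forall x, Rabs (x - x0) < r -> Pser c (x - x0) (rho x).

Definition polynomial_on (rho : R -> R) (a b : R) : Prop :=
  exists (n : nat) (c : nat -> R),
    forall x, a < x < b -> rho x = sum_f_R0 (fun i => c i * x ^ i) n.

Definition rationally_independent (a : nat -> R) (K : nat) : Prop :=
  forall lam : nat -> Q,
    fold_right Rplus 0 (map (fun k => Q2R (lam k) * a k) (seq 1 K)) = 0 ->
    forall k, (1 <= k <= K)%nat -> (lam k == 0)%Q.

(* Main.v *)
Require Import Defs.
From Stdlib Require Import Reals QArith List.
Open Scope R_scope.
From Stdlib Require Import Reals QArith Qreals List Lra Lia Arith Cantor Classical ClassicalEpsilon.
From Coquelicot Require Import Coquelicot.
Open Scope R_scope.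

Definition an_at (f : R -> R) (x : R) : Prop :=
  exists r, 0 < r /\ exists c : nat -> R,
    forall y, Rabs (y - x) < r -> Pser c (y - x) (f y).

Lemma pser_radius (c : nat -> R) (r : R) :
  (forall t, Rabs t < r -> exists l, Pser c t l) ->
  forall x, Rabs x < r -> Rbar_lt (Rabs x) (CV_radius c).
Proof.
  intros H x Hx.
  set (t := (Rabs x + r) / 2).
  assert (Ht : Rabs t < r) by (unfold t; rewrite Rabs_pos_eq; pose proof (Rabs_pos x); lra).
  destruct (H t Ht) as [l Hl].
  apply is_pseries_Reals in Hl.
  assert (Hb : exists M, forall n, Rabs (c n * t ^ n) <= M).
  { assert (Hs : ex_series (fun n => c n * t ^ n)).
    { assert (He : forall n, scal (pow_n t n) (c n) = c n * t ^ n).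
      { intro n. rewrite pow_n_pow. unfold scal; simpl; unfold mult; simpl. ring. }
      exists l. eapply is_series_ext; [exact He| exact Hl]. }
    apply ex_series_lim_0 in Hs.
    destruct (proj2 (is_lim_seq_spec _ 0) Hs (mkposreal 1 Rlt_0_1)) as [N HN].
    assert (Hfin : forall K, exists M, forall n, (n <= K)%nat -> Rabs (c n * t ^ n) <= M).
    { induction K as [|K IH].
      - exists (Rabs (c 0%nat * t ^ 0)). intros n Hn. replace n with 0%nat by lia. lra.
      - destruct IH as [M HM]. exists (Rmax M (Rabs (c (S K) * t ^ (S K)))).
        intros n Hn. destruct (Nat.eq_dec n (S K)) as [->|Hne].
        + apply Rmax_r.
        + eapply Rle_trans; [apply HM; lia| apply Rmax_l]. }
    destruct (Hfin N) as [M HM]. exists (Rmax M 1). intros n.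
    destruct (le_lt_dec n N) as [Hn|Hn].
    + eapply Rle_trans; [apply HM; lia| apply Rmax_l].
    + eapply Rle_trans; [| apply Rmax_r]. specialize (HN n ltac:(lia)). simpl in HN.
      rewrite Rminus_0_r in HN. lra. }
  pose proof (CV_radius_bounded c) as [Hub _].
  assert (Hle : Rbar_le t (CV_radius c)) by (apply Hub; exact Hb).
  unfold t in *.
  destruct (CV_radius c) as [v| |]; simpl in *; try easy.
  pose proof (Rabs_pos x). lra.
Qed.

Lemma loc_ball (P : R -> Prop) (x r y : R) :
  Rabs (y - x) < r -> (forall z, Rabs (z - x) < r -> P z) -> locally y P.
Proof.
  intros Hy H.
  assert (He : 0 < r - Rabs (y - x)) by lra.
  exists (mkposreal _ He). intros z Hz. apply H.
  change (Rabs (z - y) < r - Rabs (y - x)) in Hz.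
  replace (z - x) with ((z - y) + (y - x)) by ring.
  eapply Rle_lt_trans; [apply Rabs_triang|]. lra.
Qed.

Section Local.
Variables (f : R -> R) (x r : R) (c : nat -> R).
Hypothesis Hr : 0 < r.
Hypothesis Hc : forall y, Rabs (y - x) < r -> Pser c (y - x) (f y).

Lemma loc_rad : forall t, Rabs t < r -> Rbar_lt (Rabs t) (CV_radius c).
Proof.
  apply pser_radius. intros t Ht. exists (f (t + x)).
  replace t with (t + x - x) at 1 by ring. apply Hc. replace (t + x - x) with t by ring. exact Ht.
Qed.

Lemma loc_eq : forall y, Rabs (y - x) < r -> f y = PSeries c (y - x).
Proof.
  intros y Hy. symmetry. apply is_pseries_unique. apply is_pseries_Reals. apply Hc; exact Hy.
Qed.

Lemma loc_D : forall y, Rabs (y - x) < r -> forall n,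
  Derive_n f n y = PSeries (PS_derive_n n c) (y - x).
Proof.
  intros y Hy n.
  rewrite (Derive_n_ext_loc f (fun z => PSeries c (z + - x))).
  - rewrite Derive_n_comp_trans. apply Derive_n_PSeries. apply loc_rad. exact Hy.
  - eapply loc_ball; [exact Hy|]. intros z Hz. apply loc_eq. exact Hz.
Qed.

Lemma loc_ex : forall y, Rabs (y - x) < r -> forall n, ex_derive_n f n y.
Proof.
  intros y Hy n.
  apply (ex_derive_n_ext_loc (fun z => PSeries c (z + - x))).
  - eapply loc_ball; [exact Hy|]. intros z Hz. symmetry. apply loc_eq. exact Hz.
  - apply ex_derive_n_comp_trans. apply ex_derive_n_PSeries. apply loc_rad. exact Hy.
Qed.

Lemma loc_coef : forall n, Derive_n f n x = c n * INR (fact n).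
Proof.
  intro n. rewrite (Derive_n_ext_loc f (fun z => PSeries c (z + - x))).
  - rewrite Derive_n_comp_trans. replace (x + - x) with 0 by ring. apply Derive_n_coef.
    replace 0 with (Rabs 0) by apply Rabs_R0. apply loc_rad. rewrite Rabs_R0; exact Hr.
  - eapply loc_ball with (y := x); [rewrite Rminus_eq_0, Rabs_R0; exact Hr|].
    intros z Hz. apply loc_eq. exact Hz.
Qed.
End Local.

Lemma an_smooth f x : an_at f x -> exists r, 0 < r /\
  forall y, Rabs (y - x) < r -> forall n, ex_derive (Derive_n f n) y.
Proof.
  intros [r [Hr [c Hc]]]. exists r. split; [exact Hr|].
  intros y Hy n. change (ex_derive_n f (S n) y). eapply loc_ex; eauto.
Qed.

Lemma cont_of_ex (h : R -> R) x : ex_derive h x ->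
  forall e, 0 < e -> exists d, 0 < d /\ forall t, Rabs (t - x) < d -> Rabs (h t - h x) < e.
Proof.
  intros Hd e He.
  apply ex_derive_continuous in Hd.
  destruct (Hd (ball (h x) e) (locally_ball (h x) (mkposreal e He))) as [d Hd'].
  exists d. split; [apply cond_pos|]. intros t Ht. apply Hd'. exact Ht.
Qed.

Lemma zero_of_cont (h : R -> R) x : ex_derive h x ->
  (forall e, 0 < e -> exists t, Rabs (t - x) < e /\ h t = 0) -> h x = 0.
Proof.
  intros Hd H. destruct (Req_dec (h x) 0) as [|Hne]; [assumption|].
  exfalso. destruct (cont_of_ex h x Hd (Rabs (h x)) (Rabs_pos_lt _ Hne)) as [d [Hd0 Hd1]].
  destruct (H d Hd0) as [t [Ht Ht0]]. specialize (Hd1 t Ht). rewrite Ht0 in Hd1.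
  rewrite Rminus_0_l, Rabs_Ropp in Hd1. lra.
Qed.

Lemma conn_right (A : R -> Prop) (a b x1 : R) :
  (forall x, a < x < b -> A x -> exists r, 0 < r /\ forall y, Rabs (y - x) < r -> A y) ->
  (forall x, a < x < b -> (forall e, 0 < e -> exists t, Rabs (t - x) < e /\ A t) -> A x) ->
  a < x1 < b -> A x1 -> forall x2, x1 <= x2 < b -> A x2.
Proof.
  intros Hop Hcl Hx1 HA1 x2 Hx2.
  set (E := fun y => x1 <= y <= x2 /\ forall t, x1 <= t <= y -> A t).
  assert (HE1 : E x1).
  { split; [lra|]. intros t Ht. replace t with x1 by lra. exact HA1. }
  assert (Hbd : bound E) by (exists x2; intros y [Hy _]; lra).
  destruct (completeness E Hbd (ex_intro _ x1 HE1)) as [s [Hub Hlub]].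
  assert (Hs1 : x1 <= s) by (apply Hub; exact HE1).
  assert (Hs2 : s <= x2) by (apply Hlub; intros y [Hy _]; lra).
  assert (Hbelow : forall t, x1 <= t < s -> A t).
  { intros t Ht. destruct (classic (exists y, E y /\ t < y)) as [[y [[_ Hy] Hty]]|Hn].
    - apply Hy. lra.
    - exfalso. assert (s <= t); [|lra]. apply Hlub. intros y Hy.
      destruct (Rle_dec y t); [assumption|]. exfalso. apply Hn. exists y. split; [exact Hy|lra]. }
  assert (HAs : A s).
  { apply Hcl; [lra|]. intros e He. destruct (Req_dec s x1) as [Heq|Hne].
    - exists x1. split; [rewrite Heq, Rminus_eq_0, Rabs_R0; exact He| exact HA1].
    - exists (Rmax x1 (s - e / 2)). split.
      + unfold Rmax; destruct (Rle_dec x1 (s - e/2)); rewrite Rabs_left1; lra.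
      + apply Hbelow. unfold Rmax; destruct (Rle_dec x1 (s - e/2)); lra. }
  destruct (Req_dec s x2) as [<-|Hne]; [exact HAs|].
  exfalso. destruct (Hop s ltac:(lra) HAs) as [r [Hr Hr']].
  set (y := s + Rmin r (x2 - s) / 2).
  assert (Hm1 : 0 < Rmin r (x2 - s)) by (apply Rmin_pos; lra).
  assert (Hm2 : Rmin r (x2 - s) <= r) by apply Rmin_l.
  assert (Hm3 : Rmin r (x2 - s) <= x2 - s) by apply Rmin_r.
  assert (HEy : E y).
  { split; [unfold y; lra|]. intros t Ht. destruct (Rlt_dec t s) as [Hts|Hts].
    - apply Hbelow. lra.
    - apply Hr'. unfold y in Ht. rewrite Rabs_pos_eq; lra. }
  assert (y <= s) by (apply Hub; exact HEy). unfold y in *. lra.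
Qed.

Lemma conn_all (A : R -> Prop) (a b x1 : R) :
  (forall x, a < x < b -> A x -> exists r, 0 < r /\ forall y, Rabs (y - x) < r -> A y) ->
  (forall x, a < x < b -> (forall e, 0 < e -> exists t, Rabs (t - x) < e /\ A t) -> A x) ->
  a < x1 < b -> A x1 -> forall x2, a < x2 < b -> A x2.
Proof.
  intros Hop Hcl Hx1 HA1 x2 Hx2.
  destruct (Rle_dec x1 x2).
  - apply (conn_right A a b x1); auto. lra.
  - replace x2 with (- - x2) by ring.
    apply (conn_right (fun y => A (- y)) (- b) (- a) (- x1)).
    + intros x Hx HA. destruct (Hop (- x) ltac:(lra) HA) as [r [Hr H]].
      exists r. split; [exact Hr|]. intros y Hy. apply H.
      replace (- y - - x) with (- (y - x)) by ring. rewrite Rabs_Ropp. exact Hy.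
    + intros x Hx H. apply Hcl; [lra|]. intros e He. destruct (H e He) as [t [Ht HAt]].
      exists (- t). split; [|exact HAt]. replace (- t - - x) with (- (t - x)) by ring.
      rewrite Rabs_Ropp. exact Ht.
    + lra.
    + replace (- - x1) with x1 by ring. exact HA1.
    + lra.
Qed.

Lemma propagate (f : R -> R) (a b : R) (N : nat) (x1 : R) :
  real_analytic_on f a b -> a < x1 < b ->
  (forall n, (N <= n)%nat -> Derive_n f n x1 = 0) ->
  forall x, a < x < b -> forall n, (N <= n)%nat -> Derive_n f n x = 0.
Proof.
  intros Han Hx1 H1.
  apply (conn_all (fun y => forall n, (N <= n)%nat -> Derive_n f n y = 0) a b x1).
  - intros x Hx HA. destruct (Han x Hx) as [r [Hr [c Hc]]].
    exists r. split; [exact Hr|]. intros y Hy n Hn.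
    rewrite (loc_D f x r c Hc y Hy n).
    rewrite (PSeries_ext _ (fun _ => 0)); [apply PSeries_const_0|].
    intro k. unfold PS_derive_n.
    assert (Hck : c (k + n)%nat = 0).
    { pose proof (HA (k + n)%nat ltac:(lia)) as H0.
      rewrite (loc_coef f x r c Hr Hc) in H0.
      apply Rmult_integral in H0. destruct H0 as [H0|H0]; [exact H0|].
      exfalso. exact (INR_fact_neq_0 _ H0). }
    rewrite Hck. ring.
  - intros x Hx H n Hn. destruct (an_smooth f x (Han x Hx)) as [r [Hr Hs]].
    apply zero_of_cont.
    + apply Hs. rewrite Rminus_eq_0, Rabs_R0. exact Hr.
    + intros e He. destruct (H e He) as [t [Ht HAt]]. exists t. split; [exact Ht|]. apply HAt; exact Hn.
  - exact Hx1.
  - exact H1.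
Qed.

Lemma ident (g : R -> R) (w r : R) : 0 < r ->
  (forall y, Rabs (y - w) < r -> forall n, ex_derive (Derive_n g n) y) ->
  (forall e, 0 < e -> exists z, w < z < w + e /\ g z = 0) ->
  forall n, Derive_n g n w = 0.
Proof.
  intros Hr Hs H0.
  assert (RA : forall n e, 0 < e -> exists z, w < z < w + e /\ Derive_n g n z = 0).
  { induction n as [|n IH].
    - exact H0.
    - intros e He.
      destruct (IH (Rmin e r) ltac:(apply Rmin_pos; lra)) as [z1 [Hz1 Hz1']].
      destruct (IH (z1 - w) ltac:(lra)) as [z2 [Hz2 Hz2']].
      assert (Hm1 := Rmin_l e r). assert (Hm2 := Rmin_r e r).
      assert (Hin : forall x, z2 <= x <= z1 -> Rabs (x - w) < r).
      { intros x Hx. rewrite Rabs_pos_eq; lra. }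
      destruct (MVT_gen (Derive_n g n) z2 z1 (Derive_n g (S n))) as [c [Hc Hc']].
      + intros x Hx. rewrite Rmin_left in Hx by lra. rewrite Rmax_right in Hx by lra.
        apply Derive_correct. apply Hs. apply Hin. lra.
      + intros x Hx. rewrite Rmin_left in Hx by lra. rewrite Rmax_right in Hx by lra.
        apply continuity_pt_filterlim. apply (ex_derive_continuous (Derive_n g n)). apply Hs. apply Hin. lra.
      + rewrite Rmin_left in Hc by lra. rewrite Rmax_right in Hc by lra.
        exists c. split; [lra|].
        rewrite Hz1', Hz2' in Hc'.
        assert (Hd : Derive_n g (S n) c * (z1 - z2) = 0) by lra.
        apply Rmult_integral in Hd. destruct Hd as [Hd|Hd]; [exact Hd| lra]. }
  intro n. apply zero_of_cont.
  - apply Hs. rewrite Rminus_eq_0, Rabs_R0. exact Hr.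
  - intros e He. destruct (RA n e He) as [z [Hz Hz']]. exists z. split; [|exact Hz'].
    rewrite Rabs_pos_eq; lra.
Qed.

Lemma Derive_n_S_l (f : R -> R) : forall n x, Derive_n f (S n) x = Derive_n (Derive f) n x.
Proof.
  induction n as [|n IH]; intro x.
  - reflexivity.
  - change (Derive (Derive_n f (S n)) x = Derive (Derive_n (Derive f) n) x).
    apply Derive_ext. exact IH.
Qed.

Definition antid (d : nat -> R) (i : nat) : R :=
  match i with O => 0 | S j => d j / INR (S j) end.

Lemma poly_deriv (d : nat -> R) : forall N x,
  is_derive (fun x => sum_f_R0 (fun i => antid d i * x ^ i) (S N)) x
            (sum_f_R0 (fun i => d i * x ^ i) N).
Proof.
  induction N as [|N IH]; intro x.
  - simpl. unfold antid.
    assert (H1 : INR 1 <> 0) by (simpl; lra).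
    auto_derive; [exact I|]. simpl. field.
  - change (is_derive (fun x => sum_f_R0 (fun i => antid d i * x ^ i) (S N) + antid d (S (S N)) * x ^ (S (S N))) x
             (sum_f_R0 (fun i => d i * x ^ i) N + d (S N) * x ^ (S N))).
    apply (is_derive_plus (fun x => sum_f_R0 (fun i => antid d i * x ^ i) (S N))
            (fun x => antid d (S (S N)) * x ^ (S (S N)))).
    + apply IH.
    + unfold antid. assert (H2 : INR (S (S N)) <> 0) by (apply not_0_INR; lia).
      auto_derive; [exact I|].
      replace (Init.Nat.pred (S (S N))) with (S N) by reflexivity.
      change (match N with 0%nat => 1 | S _ => INR N + 1 end) with (INR (S N)).
      rewrite S_INR in H2. simpl. field. exact H2.
Qed.

Lemma sum_const0 (C x : R) : forall n,
  sum_f_R0 (fun i => (if Nat.eqb i 0 then C else 0) * x ^ i) n = C.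
Proof. induction n as [|n IH]; simpl; [ring| rewrite IH; ring]. Qed.

Lemma minmax_in (u v a b t : R) : a < u < b -> a < v < b ->
  Rmin u v <= t -> t <= Rmax u v -> a < t < b.
Proof. intros. unfold Rmin, Rmax in *. destruct (Rle_dec u v); lra. Qed.

Lemma poly_of_deriv : forall N (f : R -> R) (a b : R), a < b ->
  (forall x, a < x < b -> forall n, ex_derive (Derive_n f n) x) ->
  (forall x, a < x < b -> Derive_n f N x = 0) ->
  exists c : nat -> R, forall x, a < x < b -> f x = sum_f_R0 (fun i => c i * x ^ i) N.
Proof.
  induction N as [|N IH]; intros f a b Hab Hs HN.
  - exists (fun _ => 0). intros x Hx. simpl. rewrite <- (HN x Hx). simpl. ring.
  - destruct (IH (Derive f) a b Hab) as [d Hd].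
    + intros x Hx n. apply (ex_derive_ext (Derive_n f (S n))).
      * intro t. apply Derive_n_S_l.
      * apply Hs. exact Hx.
    + intros x Hx. rewrite <- Derive_n_S_l. apply HN. exact Hx.
    + set (Q := fun x => sum_f_R0 (fun i => antid d i * x ^ i) (S N)).
      set (h := fun x => f x - Q x).
      assert (Hh : forall x, a < x < b -> is_derive h x 0).
      { intros x Hx. replace 0 with (Derive f x - sum_f_R0 (fun i => d i * x ^ i) N) by (rewrite (Hd x Hx); ring).
        apply (is_derive_minus f Q). 
        - apply Derive_correct. exact (Hs x Hx 0%nat).
        - apply poly_deriv. }
      set (x0 := (a + b) / 2).
      assert (Hconst : forall x, a < x < b -> h x = h x0).
      { intros x Hx. destruct (MVT_gen h x0 x (fun _ => 0)) as [c [Hc Hc']].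
        - intros t Ht. apply Hh. apply (minmax_in x0 x); [unfold x0; lra|exact Hx|lra|lra].
        - intros t Ht. apply continuity_pt_filterlim. apply (ex_derive_continuous h).
          exists 0. apply Hh. apply (minmax_in x0 x); [unfold x0; lra|exact Hx|lra|lra].
        - lra. }
      exists (fun i => antid d i + (if Nat.eqb i 0 then h x0 else 0)).
      intros x Hx.
      rewrite (sum_eq _ (fun i => antid d i * x ^ i + (if Nat.eqb i 0 then h x0 else 0) * x ^ i))
        by (intros; ring).
      rewrite sum_plus, sum_const0. rewrite <- (Hconst x Hx). unfold h, Q. ring.
Qed.

Lemma pser_ext (a b : nat -> R) x l : (forall n, a n = b n) -> Pser a x l -> Pser b x l.
Proof.
  intros He H e He'. destruct (H e He') as [N HN]. exists N. intros n Hn.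
  rewrite (sum_eq _ (fun i => a i * x ^ i)) by (intros; rewrite He; reflexivity). apply HN; exact Hn.
Qed.

Lemma pser_plus (a b : nat -> R) x la lb : Pser a x la -> Pser b x lb ->
  Pser (fun n => a n + b n) x (la + lb).
Proof.
  intros Ha Hb.
  assert (H : Un_cv (fun N => sum_f_R0 (fun i => a i * x ^ i) N + sum_f_R0 (fun i => b i * x ^ i) N) (la + lb)).
  { apply CV_plus; [exact Ha|exact Hb]. }
  intros e He. destruct (H e He) as [N HN]. exists N. intros n Hn.
  rewrite (sum_eq _ (fun i => a i * x ^ i + b i * x ^ i)) by (intros; ring).
  rewrite sum_plus. apply HN; exact Hn.
Qed.

Lemma pser_scal (a : nat -> R) s x l : Pser a x l -> Pser (fun n => s * a n) x (s * l).
Proof.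
  intros Ha.
  assert (H : Un_cv (fun N => s * sum_f_R0 (fun i => a i * x ^ i) N) (s * l)).
  { apply CV_mult; [intros e He; exists 0%nat; intros; unfold R_dist; rewrite Rminus_eq_0, Rabs_R0; exact He| exact Ha]. }
  intros e He. destruct (H e He) as [N HN]. exists N. intros n Hn.
  rewrite (sum_eq _ (fun i => (a i * x ^ i) * s)) by (intros; ring).
  rewrite <- scal_sum. apply HN; exact Hn.
Qed.

Lemma pser_zero x : Pser (fun _ => 0) x 0.
Proof.
  intros e He. exists 0%nat. intros n Hn.
  rewrite (sum_eq _ (fun _ => 0 * 0)) by (intros; ring).
  rewrite <- scal_sum. unfold R_dist. rewrite Rmult_0_l, Rminus_eq_0, Rabs_R0. exact He.
Qed.

Lemma pser_scale_arg (a : nat -> R) s t l : Pser a (s * t) l -> Pser (fun n => a n * s ^ n) t l.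
Proof.
  intros H e He. destruct (H e He) as [N HN]. exists N. intros n Hn.
  rewrite (sum_eq _ (fun i => a i * (s * t) ^ i)) by (intros; rewrite Rpow_mult_distr; ring).
  apply HN; exact Hn.
Qed.

Lemma an_ext f g x : (forall y, f y = g y) -> an_at f x -> an_at g x.
Proof.
  intros He [r [Hr [c Hc]]]. exists r. split; [exact Hr|]. exists c. intros y Hy. rewrite <- He. apply Hc; exact Hy.
Qed.

Lemma an_affine f m s w0 : an_at f (m + s * w0) -> an_at (fun w => f (m + s * w)) w0.
Proof.
  intros [r [Hr [c Hc]]].
  assert (Hs : 0 < Rabs s + 1) by (pose proof (Rabs_pos s); lra).
  exists (r / (Rabs s + 1)). split; [apply Rdiv_lt_0_compat; lra|].
  exists (fun n => c n * s ^ n). intros w Hw.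
  apply pser_scale_arg. replace (s * (w - w0)) with (m + s * w - (m + s * w0)) by ring.
  apply Hc. replace (m + s * w - (m + s * w0)) with (s * (w - w0)) by ring.
  rewrite Rabs_mult.
  apply (Rmult_lt_compat_r (Rabs s + 1)) in Hw; [|exact Hs].
  unfold Rdiv in Hw. rewrite Rmult_assoc, Rinv_l in Hw by lra.
  pose proof (Rabs_pos (w - w0)). pose proof (Rabs_pos s). nra.
Qed.

Lemma an_plus f g x : an_at f x -> an_at g x -> an_at (fun y => f y + g y) x.
Proof.
  intros [r1 [Hr1 [c1 Hc1]]] [r2 [Hr2 [c2 Hc2]]].
  exists (Rmin r1 r2). split; [apply Rmin_pos; assumption|].
  exists (fun n => c1 n + c2 n). intros y Hy. apply pser_plus.
  - apply Hc1. pose proof (Rmin_l r1 r2). lra.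
  - apply Hc2. pose proof (Rmin_r r1 r2). lra.
Qed.

Lemma an_scal f s x : an_at f x -> an_at (fun y => s * f y) x.
Proof.
  intros [r [Hr [c Hc]]]. exists r. split; [exact Hr|]. exists (fun n => s * c n).
  intros y Hy. apply pser_scal. apply Hc; exact Hy.
Qed.

Lemma an_zero x : an_at (fun _ => 0) x.
Proof. exists 1. split; [lra|]. exists (fun _ => 0). intros y _. apply pser_zero. Qed.

Definition Gf (rho : R -> R) (m : R) (mu : nat -> R) (l : list nat) (w : R) : R :=
  fold_right Rplus 0 (map (fun k => mu k * rho (m + INR k * w)) l).

Lemma an_G rho m mu w0 : forall l, (forall k, In k l -> an_at rho (m + INR k * w0)) ->
  an_at (Gf rho m mu l) w0.
Proof.
  induction l as [|k l IH]; intros H.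
  - apply an_zero.
  - apply (an_plus (fun w => mu k * rho (m + INR k * w)) (Gf rho m mu l)).
    + apply (an_scal (fun w => rho (m + INR k * w))). apply an_affine. apply H. left; reflexivity.
    + apply IH. intros j Hj. apply H. right; exact Hj.
Qed.

Lemma pser_G rho m mu r c B : 0 < B ->
  (forall y, Rabs (y - m) < r -> Pser c (y - m) (rho y)) ->
  forall l, (forall k, In k l -> INR k <= B) ->
  forall w, Rabs w < r / B ->
  Pser (fun n => c n * fold_right Rplus 0 (map (fun k => mu k * INR k ^ n) l)) w (Gf rho m mu l w).
Proof.
  intros HB Hc l. induction l as [|k l IH]; intros Hl w Hw.
  - simpl. apply (pser_ext (fun _ => 0)); [intros; ring|]. apply pser_zero.
  - simpl. apply (pser_ext (fun n => mu k * (c n * INR k ^ n) + c n * fold_right Rplus 0 (map (fun k => mu k * INR k ^ n) l)));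
      [intros; ring|].
    apply pser_plus.
    + apply pser_scal. apply pser_scale_arg.
      assert (Hc' := Hc (m + INR k * w)).
      replace (m + INR k * w - m) with (INR k * w) in Hc' by ring. apply Hc'.
      rewrite Rabs_mult, Rabs_pos_eq by apply pos_INR.
      assert (Hk : INR k <= B) by (apply Hl; left; reflexivity).
      apply (Rmult_lt_compat_r B) in Hw; [|exact HB].
      unfold Rdiv in Hw. rewrite Rmult_assoc, Rinv_l in Hw by lra.
      pose proof (Rabs_pos w). pose proof (pos_INR k). nra.
    + apply IH; [|exact Hw]. intros j Hj. apply Hl. right; exact Hj.
Qed.

Definition sk (f : nat -> R) (K : nat) : R := fold_right Rplus 0 (map f (seq 1 K)).

Lemma fr_shift : forall (l : list R) a, fold_right Rplus a l = fold_right Rplus 0 l + a.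
Proof. induction l as [|x l IH]; intro a; simpl; [ring| rewrite IH; ring]. Qed.

Lemma sk_S f K : sk f (S K) = sk f K + f (S K).
Proof.
  unfold sk. rewrite seq_S, map_app, fold_right_app. simpl. rewrite fr_shift.
  replace (1 + K)%nat with (S K) by lia. ring.
Qed.

Lemma sk_0 f : sk f 0 = 0.
Proof. reflexivity. Qed.

Lemma sk_nonneg f K : (forall k, 0 <= f k) -> 0 <= sk f K.
Proof.
  intro H. induction K as [|K IH]; [rewrite sk_0; lra| rewrite sk_S; pose proof (H (S K)); lra].
Qed.

Lemma sk_bound (mu : nat -> R) n : forall K,
  Rabs (sk (fun k => mu k * INR k ^ n) K) <= sk (fun k => Rabs (mu k)) K * INR K ^ n.
Proof.
  induction K as [|K IH].
  - rewrite !sk_0, Rabs_R0. lra.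
  - rewrite !sk_S. eapply Rle_trans; [apply Rabs_triang|].
    rewrite Rabs_mult, (Rabs_pos_eq (INR (S K) ^ n)) by (apply pow_le, pos_INR).
    assert (H1 : INR K ^ n <= INR (S K) ^ n) by (apply pow_incr; split; [apply pos_INR| apply le_INR; lia]).
    assert (H2 : 0 <= sk (fun k => Rabs (mu k)) K) by (apply sk_nonneg; intro; apply Rabs_pos).
    pose proof (Rabs_pos (mu (S K))). nra.
Qed.

Lemma sk_nonzero (mu : nat -> R) : forall K, (exists k, (1 <= k <= K)%nat /\ mu k <> 0) ->
  exists N, forall n, (N <= n)%nat -> sk (fun k => mu k * INR k ^ n) K <> 0.
Proof.
  induction K as [|K IH]; intros [k [Hk Hmu]]; [lia|].
  destruct (Req_dec (mu (S K)) 0) as [Hz|Hnz].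
  - destruct IH as [N HN].
    + exists k. split; [|exact Hmu]. destruct (Nat.eq_dec k (S K)) as [->|]; [contradiction|lia].
    + exists N. intros n Hn. rewrite sk_S, Hz, Rmult_0_l, Rplus_0_r. apply HN; exact Hn.
  - set (M := sk (fun k => Rabs (mu k)) K).
    assert (HM : 0 <= M) by (apply sk_nonneg; intro; apply Rabs_pos).
    assert (HK : 0 < INR (S K)) by (apply lt_0_INR; lia).
    set (q := INR K / INR (S K)).
    assert (Hq0 : 0 <= q) by (unfold q; apply Rdiv_le_0_compat; [apply pos_INR| exact HK]).
    assert (Hq1 : q < 1).
    { unfold q. rewrite S_INR in *. apply (Rmult_lt_reg_r (INR K + 1)); [exact HK|].
      unfold Rdiv. rewrite Rmult_assoc, Rinv_l by lra. lra. }
    assert (Hmu' : 0 < Rabs (mu (S K))) by (apply Rabs_pos_lt; exact Hnz).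
    destruct (pow_lt_1_zero q ltac:(rewrite Rabs_pos_eq; lra) (Rabs (mu (S K)) / (M + 1))
      ltac:(apply Rdiv_lt_0_compat; lra)) as [N HN].
    exists N. intros n Hn Hsum. rewrite sk_S in Hsum.
    specialize (HN n Hn). rewrite Rabs_pos_eq in HN by (apply pow_le; exact Hq0).
    pose proof (sk_bound mu n K) as Hb. fold M in Hb.
    assert (HKq : INR K = q * INR (S K)) by (unfold q; field; lra).
    rewrite HKq, Rpow_mult_distr in Hb.
    assert (Heq : sk (fun k => mu k * INR k ^ n) K = - (mu (S K) * INR (S K) ^ n)) by lra.
    rewrite Heq, Rabs_Ropp, Rabs_mult, (Rabs_pos_eq (INR (S K) ^ n)) in Hb by (apply pow_le; lra).
    assert (Hp : 0 < INR (S K) ^ n) by (apply pow_lt; exact HK).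
    assert (Hqn : 0 <= q ^ n) by (apply pow_le; exact Hq0).
    apply (Rmult_lt_compat_r (M + 1)) in HN; [|lra].
    unfold Rdiv in HN. rewrite Rmult_assoc, Rinv_l, Rmult_1_r in HN by lra.
    nra.
Qed.

Definition zdec (n : nat) : Z := let (p, q) := Cantor.of_nat n in (Z.of_nat p - Z.of_nat q)%Z.
Definition qdec (n : nat) : Q := let (a, b) := Cantor.of_nat n in Qmake (zdec a) (Pos.of_succ_nat b).
Fixpoint vec (n k : nat) : nat :=
  match k with O => fst (Cantor.of_nat n) | S k' => vec (snd (Cantor.of_nat n)) k' end.
Definition Een (j k : nat) : Q := qdec (vec j k).

Lemma zdec_surj z : exists n, zdec n = z.
Proof.
  exists (Cantor.to_nat (Z.to_nat z, Z.to_nat (- z))). unfold zdec. rewrite Cantor.cancel_of_to. lia.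
Qed.

Lemma qdec_surj q : exists n, qdec n = q.
Proof.
  destruct q as [z d]. destruct (zdec_surj z) as [a Ha].
  exists (Cantor.to_nat (a, Init.Nat.pred (Pos.to_nat d))). unfold qdec. rewrite Cantor.cancel_of_to.
  rewrite Ha. f_equal. apply SuccNat2Pos.inv. pose proof (Pos2Nat.is_pos d). lia.
Qed.

Lemma Een_surj : forall K (lam : nat -> Q), exists j, forall k, (k <= K)%nat -> Een j k = lam k.
Proof.
  induction K as [|K IH]; intro lam.
  - destruct (qdec_surj (lam 0%nat)) as [a Ha]. exists (Cantor.to_nat (a, 0%nat)).
    intros k Hk. replace k with 0%nat by lia. unfold Een. cbn [vec]. rewrite Cantor.cancel_of_to. exact Ha.
  - destruct (IH (fun k => lam (S k))) as [j Hj]. destruct (qdec_surj (lam 0%nat)) as [a Ha].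
    exists (Cantor.to_nat (a, j)). intros [|k] Hk; unfold Een; cbn [vec]; rewrite Cantor.cancel_of_to; cbn [fst snd].
    + exact Ha.
    + apply Hj. lia.
Qed.

Fixpoint iterI (st : nat -> R -> R -> R * R) (p0 : R * R) (n : nat) : R * R :=
  match n with O => p0 | S j => st j (fst (iterI st p0 j)) (snd (iterI st p0 j)) end.

Lemma Q2R_0' : Q2R 0 = 0.
Proof. unfold Q2R. simpl. field. Qed.

Lemma baire (d : R) (K : nat) (G : (nat -> Q) -> R -> R) (good : (nat -> Q) -> Prop) :
  0 < d ->
  (forall lam lam', (forall k, (k <= K)%nat -> lam k = lam' k) -> forall w, G lam w = G lam' w) ->
  (forall lam lam', (forall k, (k <= K)%nat -> lam k = lam' k) -> good lam -> good lam') ->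
  (forall w, - d < w < d -> exists lam, good lam /\ G lam w = 0) ->
  exists lam, good lam /\ exists ws, - d < ws < d /\
    forall e, 0 < e -> exists z, ws < z < ws + e /\ G lam z = 0.
Proof.
  intros Hd HG Hgood Hdep.
  apply NNPP. intro Hno.
  set (P := fun (j : nat) (a b : R) (p : R * R) => (- d < a /\ a < b /\ b < d) ->
        a <= fst p /\ fst p < snd p /\ snd p <= b /\
        (good (Een j) -> forall z, fst p <= z <= snd p -> G (Een j) z <> 0)).
  assert (Hstep : forall j a b, exists p, P j a b p).
  { intros j a b. destruct (classic ((- d < a /\ a < b /\ b < d))) as [Hab|Hab];
      [| exists (0, 0); intro; contradiction].
    destruct (classic (good (Een j))) as [Hg|Hg];
      [| exists (a, b); intros _; simpl; split; [lra|split; [lra|split; [lra| contradiction]]]].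
    destruct (classic (exists c e, a <= c < e /\ e <= b /\ forall z, c < z < e -> G (Een j) z <> 0))
      as [[c [e [Hce [Heb Hz]]]]|Hn].
    - exists (c + (e - c) / 3, e - (e - c) / 3). intros _. simpl.
      split; [lra| split; [lra| split; [lra|]]]. intros _ z Hz'. apply Hz. lra.
    - exfalso. apply Hno. exists (Een j). split; [exact Hg|].
      exists ((a + b) / 2). split; [lra|]. intros e He.
      apply NNPP. intro Hn2. apply Hn.
      exists ((a + b) / 2), (Rmin ((a + b) / 2 + e) b).
      assert (Hm1 := Rmin_l ((a + b) / 2 + e) b). assert (Hm2 := Rmin_r ((a + b) / 2 + e) b).
      assert (Hm3 : (a + b) / 2 < Rmin ((a + b) / 2 + e) b)
        by (unfold Rmin; destruct (Rle_dec ((a + b) / 2 + e) b); lra).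
      split; [lra| split; [lra|]]. intros z Hz Hz0. apply Hn2. exists z. split; [lra| exact Hz0]. }
  set (st := fun j a b => proj1_sig (constructive_indefinite_description _ (Hstep j a b))).
  assert (Hst : forall j a b, P j a b (st j a b))
    by (intros; unfold st; apply proj2_sig).
  set (I := iterI st (- d / 2, d / 2)).
  assert (Hinv : forall j, - d < fst (I j) < snd (I j) /\ snd (I j) < d).
  { induction j as [|j IH]; [simpl; lra|].
    destruct (Hst j (fst (I j)) (snd (I j)) ltac:(lra)) as [H1 [H2 [H3 _]]].
    change (I (S j)) with (st j (fst (I j)) (snd (I j))). lra. }
  assert (Hmono1 : forall j, fst (I j) <= fst (I (S j)) /\ snd (I (S j)) <= snd (I j)).
  { intro j. destruct (Hst j (fst (I j)) (snd (I j)) ltac:(pose proof (Hinv j); lra)) as [H1 [H2 [H3 _]]].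
    change (I (S j)) with (st j (fst (I j)) (snd (I j))). lra. }
  assert (Hmono : forall i t : nat, fst (I i) <= fst (I (i + t)%nat) /\ snd (I (i + t)%nat) <= snd (I i)).
  { intros i t. induction t as [|t IH]; [rewrite Nat.add_0_r; lra|].
    rewrite Nat.add_succ_r. pose proof (Hmono1 (i + t)%nat). lra. }
  assert (Hab : forall i j : nat, fst (I j) <= snd (I i)).
  { intros i j. destruct (Nat.le_ge_cases i j) as [Hij|Hij].
    - replace j with (i + (j - i))%nat by lia. pose proof (Hmono i (j - i)%nat).
      pose proof (Hinv (i + (j - i))%nat). lra.
    - replace i with (j + (i - j))%nat by lia. pose proof (Hmono j (i - j)%nat).
      pose proof (Hinv (j + (i - j))%nat). lra. }
  set (E := fun x => exists j, x = fst (I j)).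
  destruct (completeness E) as [x [Hub Hlub]].
  { exists d. intros y [j ->]. pose proof (Hinv j). lra. }
  { exists (fst (I 0%nat)). exists 0%nat. reflexivity. }
  assert (Hx1 : forall j, fst (I j) <= x) by (intro j; apply Hub; exists j; reflexivity).
  assert (Hx2 : forall i, x <= snd (I i)) by (intro i; apply Hlub; intros y [j ->]; apply Hab).
  assert (Hxd : - d < x < d) by (pose proof (Hinv 0%nat); pose proof (Hx1 0%nat); pose proof (Hx2 0%nat); lra).
  destruct (Hdep x Hxd) as [lam [Hg HG0]].
  destruct (Een_surj K lam) as [j Hj].
  destruct (Hst j (fst (I j)) (snd (I j)) ltac:(pose proof (Hinv j); lra)) as [_ [_ [_ Hav]]].
  apply (Hav (Hgood lam (Een j) (fun k Hk => eq_sym (Hj k Hk)) Hg) x).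
  - change (st j (fst (I j)) (snd (I j))) with (I (S j)). split; [apply Hx1| apply Hx2].
  - rewrite (HG (Een j) lam Hj). exact HG0.
Qed.

Theorem lemma3 (K : nat) (rho : R -> R) (alpha beta : R) :
  (1 <= K)%nat -> alpha < beta ->
  real_analytic_on rho alpha beta ->
  ~ polynomial_on rho alpha beta ->
  exists w0,
    - ((beta - alpha) / (2 * INR K)) < w0 < (beta - alpha) / (2 * INR K) /\
    rationally_independent
      (fun k => rho ((alpha + beta) / 2 + INR k * w0)) K.
Proof.
  intros HK Hab Han Hnp.
  set (m := (alpha + beta) / 2).
  set (d := (beta - alpha) / (2 * INR K)).
  assert (HKpos : 0 < INR K) by (apply lt_0_INR; lia).
  assert (Hd : 0 < d) by (unfold d; apply Rdiv_lt_0_compat; lra).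
  assert (HdK : d * INR K = (beta - alpha) / 2) by (unfold d; field; lra).
  set (G := fun (lam : nat -> Q) => Gf rho m (fun k => Q2R (lam k)) (seq 1 K)).
  set (good := fun (lam : nat -> Q) => exists k, (1 <= k <= K)%nat /\ Q2R (lam k) <> 0).
  apply NNPP. intro Hno.
  assert (Hdep : forall w, - d < w < d -> exists lam, good lam /\ G lam w = 0).
  { intros w Hw. apply NNPP. intro Hn. apply Hno. exists w. split; [exact Hw|].
    intros lam Hsum k Hk. apply NNPP. intro Hk0. apply Hn. exists lam. split.
    - exists k. split; [exact Hk|]. intro HQ. apply Hk0. apply eqR_Qeq. rewrite Q2R_0'. exact HQ.
    - exact Hsum. }
  assert (Hin : forall k w, In k (seq 1 K) -> - d < w < d -> alpha < m + INR k * w < beta).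
  { intros k w Hk Hw. apply in_seq in Hk.
    assert (Hk1 : 0 <= INR k <= INR K) by (split; [apply pos_INR| apply le_INR; lia]).
    assert (Habs : Rabs (INR k * w) < (beta - alpha) / 2).
    { rewrite Rabs_mult, Rabs_pos_eq by lra.
      assert (Rabs w < d) by (apply Rabs_def1; lra).
      pose proof (Rabs_pos w). rewrite <- HdK. nra. }
    apply Rabs_def2 in Habs. unfold m. lra. }
  destruct (baire d K G good Hd) as [lam [Hg [ws [Hws Hacc]]]].
  - intros lam lam' Heq w. unfold G, Gf. f_equal. apply map_ext_in. intros k Hk.
    apply in_seq in Hk. rewrite Heq by lia. reflexivity.
  - intros lam lam' Heq [k [Hk Hk']]. exists k. split; [exact Hk|]. rewrite <- Heq by lia. exact Hk'.
  - exact Hdep.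
  -
    assert (HanG : real_analytic_on (G lam) (- d) d).
    { intros w0 Hw0. apply an_G. intros k Hk. apply Han. apply Hin; assumption. }
    destruct (an_smooth (G lam) ws (HanG ws Hws)) as [r1 [Hr1 Hs1]].
    pose proof (ident (G lam) ws r1 Hr1 Hs1 Hacc) as Hid.
    pose proof (propagate (G lam) (- d) d 0 ws HanG Hws (fun n _ => Hid n)) as Hz.
    assert (Hm : alpha < m < beta) by (unfold m; lra).
    destruct (Han m Hm) as [r [Hr [c Hc]]].
    set (B := INR K + 1).
    assert (HB : 0 < B) by (unfold B; lra).
    set (mu := fun k => Q2R (lam k)).
    assert (Hr0 : 0 < Rmin (r / B) d) by (apply Rmin_pos; [apply Rdiv_lt_0_compat|]; lra).
    assert (Hps : forall y, Rabs (y - 0) < Rmin (r / B) d ->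
      Pser (fun n => c n * sk (fun k => mu k * INR k ^ n) K) (y - 0) (G lam y)).
    { intros y Hy. rewrite Rminus_0_r in *. unfold G, sk.
      apply (pser_G rho m mu r c B HB Hc).
      - intros k Hk. apply in_seq in Hk. unfold B.
        assert (INR k <= INR K) by (apply le_INR; lia). lra.
      - pose proof (Rmin_l (r / B) d). lra. }
    assert (He0 : forall n, c n * sk (fun k => mu k * INR k ^ n) K = 0).
    { intro n. pose proof (loc_coef (G lam) 0 _ _ Hr0 Hps n) as H.
      rewrite (Hz 0 ltac:(lra) n ltac:(lia)) in H.
      symmetry in H. apply Rmult_integral in H. destruct H as [H|H]; [exact H|].
      exfalso. exact (INR_fact_neq_0 _ H). }
    destruct (sk_nonzero mu K Hg) as [N HN].
    assert (Hc0 : forall n, (N <= n)%nat -> Derive_n rho n m = 0).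
    { intros n Hn. rewrite (loc_coef rho m r c Hr Hc n).
      pose proof (He0 n) as H. apply Rmult_integral in H. destruct H as [H|H].
      - rewrite H. ring.
      - exfalso. exact (HN n Hn H). }
    pose proof (propagate rho alpha beta N m Han Hm Hc0) as Hall.
    apply Hnp. destruct (poly_of_deriv N rho alpha beta Hab) as [cp Hcp].
    + intros x Hx n. destruct (an_smooth rho x (Han x Hx)) as [r2 [Hr2 Hs2]].
      apply Hs2. rewrite Rminus_eq_0, Rabs_R0. exact Hr2.
    + intros x Hx. apply Hall; [exact Hx| lia].
    + exists N, cp. exact Hcp.
Qed.
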